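(* Let $(S,\mathcal{S})$ be a measurable space with $\Delta\in\mathcal{S}\otimes\mathcal{S}$ and let $\mathcal{H}\subseteq\mathcal{S}$ be a semiring with $\sigma(\mathcal{H})=\mathcal{S}$. Then $\mathcal{H}$ is self-dissecting.
   Context: $\Delta=\{(x,x)\mid x\in S\}$. For $A\subseteq S$ and, for each $n\in\mathbb{N}$, a family $\{A_{n,k}\mid k\in I_n\}$ of subsets of $S$ with $I_n\subseteq\mathbb{N}$, the sequence $(\{A_{n,k}\mid k\in I_n\})_{n}$ is a dissecting system for $A$ if: (i) for each $n$ the sets $A_{n,k}$, $k\in I_n$, are pairwise disjoint, $\bigcup_{k\in I_n}A_{n,k}\subseteq\bigcup_{k\in I_{n+1}}A_{n+1,k}\subseteq A$, and $\bigcup_{n,k}A_{n,k}=A$; (ii) for any distinct $x,y\in A$ there is $n(x,y)$ such that for all $n\ge n(x,y)$ some $A_{n,k}$ contains exactly one of $x,y$. A nonempty family $\mathcal{E}\subseteq\mathcal{P}(S)$ is self-dissecting if every $A\in\mathcal{E}$ has a dissecting system with $\{A_{n,k}\mid k\in I_n\}\subseteq\mathcal{E}$ for all $n$. *)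

(* Defs.v *)
From Stdlib Require Import Arith.

Definition set (T : Type) := T -> Prop.

Definition sigma_algebra {T : Type} (F : set (set T)) : Prop :=
  F (fun _ => False) /\
  (forall A, F A -> F (fun x => ~ A x)) /\
  (forall A : nat -> set T, (forall n, F (A n)) -> F (fun x => exists n, A n x)).

Definition sigma_gen {T : Type} (G : set (set T)) : set (set T) :=
  fun A => forall F : set (set T), sigma_algebra F -> (forall B, G B -> F B) -> F A.

Definition prod_sigma {T U : Type} (F1 : set (set T)) (F2 : set (set U))
  : set (set (T * U)) :=
  sigma_gen (fun R => exists A B, F1 A /\ F2 B /\
                        forall p, R p <-> (A (fst p) /\ B (snd p))).

Definition diagonal (T : Type) : set (T * T) := fun p => fst p = snd p.

Definition semiring {T : Type} (H : set (set T)) : Prop :=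
  H (fun _ => False) /\
  (forall A B, H A -> H B -> H (fun x => A x /\ B x)) /\
  (forall A B, H A -> H B ->
     exists (m : nat) (C : nat -> set T),
       (forall i, i < m -> H (C i)) /\
       (forall i j, i < m -> j < m -> i <> j -> forall x, C i x -> C j x -> False) /\
       (forall x, (A x /\ ~ B x) <-> exists i, i < m /\ C i x)).

Definition dissecting_system {T : Type} (I : nat -> set nat)
  (Af : nat -> nat -> set T) (A : set T) : Prop :=
  (forall n k l, I n k -> I n l -> k <> l -> forall x, Af n k x -> Af n l x -> False) /\
  (forall n x, (exists k, I n k /\ Af n k x) -> exists k, I (S n) k /\ Af (S n) k x) /\
  (forall n k x, I n k -> Af n k x -> A x) /\
  (forall x, A x -> exists n k, I n k /\ Af n k x) /\
  (forall x y, A x -> A y -> x <> y ->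
     exists N, forall n, N <= n ->
       exists k, I n k /\ ((Af n k x /\ ~ Af n k y) \/ (~ Af n k x /\ Af n k y))).

Definition self_dissecting {T : Type} (E : set (set T)) : Prop :=
  (exists A, E A) /\
  forall A, E A -> exists (I : nat -> set nat) (Af : nat -> nat -> set T),
    dissecting_system I Af A /\ (forall n k, I n k -> E (Af n k)).

(* Main.v *)
Require Import Defs.
From Stdlib Require Import Arith.
From Stdlib Require Import Lia Cantor Classical ClassicalEpsilon.

Lemma choice_nat {X : Type} (P : nat -> X -> Prop) :
  (forall n, exists x, P n x) -> exists f : nat -> X, forall n, P n (f n).
Proof.
  intro HP. exists (fun n => proj1_sig (constructive_indefinite_description _ (HP n))).
  intro n. exact (proj2_sig (constructive_indefinite_description _ (HP n))).
Qed.

Definition Det {U} (K : set (set U)) (A : set U) : Prop :=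
  exists g : nat -> set U, (forall m, K (g m)) /\
    forall x y, (forall m, g m x <-> g m y) -> (A x <-> A y).

Definition pk {U} (G : nat -> nat -> set U) (k : nat) : set U :=
  G (fst (Cantor.of_nat k)) (snd (Cantor.of_nat k)).

Lemma pk_spec {U} (G : nat -> nat -> set U) n j : pk G (Cantor.to_nat (n,j)) = G n j.
Proof. unfold pk. rewrite Cantor.cancel_of_to. reflexivity. Qed.

Lemma Det_sigma {U} (K : set (set U)) : (exists B, K B) -> sigma_algebra (Det K).
Proof.
  intros [B0 HB0]. split; [|split].
  - exists (fun _ => B0). split; auto. intros; tauto.
  - intros A [g [Hg Hd]]. exists g. split; auto. intros x y Hxy.
    specialize (Hd x y Hxy). tauto.
  - intros A HA.
    destruct (choice_nat (fun n g => (forall m, K (g m)) /\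
      forall x y, (forall m, g m x <-> g m y) -> (A n x <-> A n y)) HA) as [G HG].
    exists (pk G). split.
    + intro k. unfold pk. apply HG.
    + intros x y Hxy.
      assert (E : forall n, A n x <-> A n y).
      { intro n. apply (proj2 (HG n)). intro m. rewrite <- (pk_spec G n m). apply Hxy. }
      split; intros [n Hn]; exists n; apply E; auto.
Qed.

Lemma Det_gen {U} (K : set (set U)) B : K B -> Det K B.
Proof. intro HB. exists (fun _ => B). split; auto. intros x y Hxy. apply (Hxy 0). Qed.

Lemma separating (S : Type) (SS H : set (set S)) :
  sigma_algebra SS -> prod_sigma SS SS (diagonal S) ->
  H (fun _ => False) ->
  (forall A, SS A -> sigma_gen H A) ->
  exists h : nat -> set S, (forall k, H (h k)) /\
    forall x y, x <> y -> exists k, ~ (h k x <-> h k y).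
Proof.
  intros HSS Hprod H0 Hgen.
  pose (K := fun R : set (S * S) => exists A, SS A /\
     ((forall p, R p <-> A (fst p)) \/ (forall p, R p <-> A (snd p)))).
  assert (Hsig : sigma_algebra (Det K)).
  { apply Det_sigma. exists (fun _ => False). exists (fun _ => False).
    split; [apply HSS|]. left. intros; tauto. }
  assert (HD : Det K (diagonal S)).
  { apply Hprod; auto. intros R [A [B [HA [HB HR]]]].
    exists (fun m => if m =? 0 then (fun p : S * S => A (fst p)) else (fun p => B (snd p))).
    split.
    - intro m. destruct m; simpl.
      + exists A. split; auto. left. intros; tauto.
      + exists B. split; auto. right. intros; tauto.
    - intros x y Hxy. rewrite (HR x), (HR y).
      pose proof (Hxy 0) as E0. pose proof (Hxy 1) as E1. simpl in E0, E1. tauto. }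
  destruct HD as [g [Hg Hd]].
  destruct (choice_nat (fun m A => SS A /\
     ((forall p, g m p <-> A (fst p)) \/ (forall p, g m p <-> A (snd p)))) Hg) as [Am HAm].
  assert (HDH : forall m, exists g' : nat -> set S, (forall j, H (g' j)) /\
      forall x y, (forall j, g' j x <-> g' j y) -> (Am m x <-> Am m y)).
  { intro m. apply (Hgen (Am m) (proj1 (HAm m)) (Det H)).
    - apply Det_sigma. exists (fun _ => False). exact H0.
    - apply Det_gen. }
  destruct (choice_nat _ HDH) as [hm Hhm].
  exists (pk hm). split.
  - intro k. unfold pk. apply Hhm.
  - intros x y Hxy. apply NNPP. intro Hn.
    assert (Hall : forall k, pk hm k x <-> pk hm k y).
    { intro k. apply NNPP. intro Hk. apply Hn. exists k. exact Hk. }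
    assert (EA : forall m, Am m x <-> Am m y).
    { intro m. apply (proj2 (Hhm m)). intro j. rewrite <- (pk_spec hm m j). apply Hall. }
    assert (Eg : forall m, g m (x, x) <-> g m (x, y)).
    { intro m. destruct (HAm m) as [_ [Hf | Hs]].
      - rewrite (Hf (x,x)), (Hf (x,y)). simpl. tauto.
      - rewrite (Hs (x,x)), (Hs (x,y)). simpl. apply EA. }
    apply Hxy. apply (proj1 (Hd _ _ Eg)). reflexivity.
Qed.

Definition fam_ok {S} (H : set (set S)) (m : nat) (C : nat -> set S) :=
  (forall i, i < m -> H (C i)) /\
  (forall i j, i < m -> j < m -> i <> j -> forall x, C i x -> C j x -> False).

Lemma refine {S} (H : set (set S)) (B : set S) : semiring H -> H B ->
  forall m C, fam_ok H m C -> exists m' C', fam_ok H m' C' /\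
   (forall x, (exists i, i < m /\ C i x) <-> (exists j, j < m' /\ C' j x)) /\
   (forall j, j < m' -> exists i, i < m /\ forall x, C' j x -> C i x) /\
   (forall j, j < m' -> (forall x, C' j x -> B x) \/ (forall x, C' j x -> ~ B x)).
Proof.
  intros [H0 [HI HD]] HB. induction m as [|m IH]; intros C [Ha Hb].
  - exists 0, C. split; [split; intros; lia|].
    split; [intro x; split; intros [i [Hi _]]; lia|].
    split; intros; lia.
  - destruct (IH C) as [m1 [C1 [[Ha1 Hb1] [Hc1 [He1 Hf1]]]]].
    { split; [intros i Hi; apply Ha; lia| intros i j Hi Hj Hij x Hx1 Hx2; apply (Hb i j ltac:(lia) ltac:(lia) Hij x Hx1 Hx2)]. }
    destruct (HD (C m) B (Ha m ltac:(lia)) HB) as [k [D [HDa [HDb HDc]]]].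
    pose (C' := fun j => if j <? m1 then C1 j else if j =? m1 then (fun x => C m x /\ B x)
                         else D (j - m1 - 1)).
    assert (case3 : forall j, (j < m1 /\ C' j = C1 j) \/ (j = m1 /\ C' j = (fun x => C m x /\ B x))
                              \/ (m1 < j /\ C' j = D (j - m1 - 1))).
    { intro j. unfold C'. destruct (Nat.ltb_spec j m1); [left; auto|].
      destruct (Nat.eqb_spec j m1); [right; left; auto| right; right; split; auto; lia]. }
    assert (Hin : forall j, j < m1 + 1 + k -> exists i, i < Datatypes.S m /\ forall x, C' j x -> C i x).
    { intros j Hj. destruct (case3 j) as [[Hj1 E]|[[Hj1 E]|[Hj1 E]]]; rewrite E.
      - destruct (He1 j Hj1) as [i [Hi Hs]]. exists i. split; [lia|auto].
      - exists m. split; [lia|]. intros x [Hx _]; auto.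
      - exists m. split; [lia|]. intros x Hx.
        apply (proj2 (HDc x)). exists (j - m1 - 1). split; [lia|auto]. }
    exists (m1 + 1 + k), C'. split; [split|split; [|split]].
    + intros j Hj. destruct (case3 j) as [[Hj1 E]|[[Hj1 E]|[Hj1 E]]]; rewrite E.
      * auto.
      * apply HI; [apply Ha; lia|exact HB].
      * apply HDa. lia.
    + intros i j Hi Hj Hij x Hxi Hxj.
      destruct (case3 i) as [[Hi1 Ei]|[[Hi1 Ei]|[Hi1 Ei]]];
      destruct (case3 j) as [[Hj1 Ej]|[[Hj1 Ej]|[Hj1 Ej]]];
      rewrite Ei in Hxi; rewrite Ej in Hxj.
      * eapply Hb1; [exact Hi1|exact Hj1|exact Hij|eassumption..].
      * destruct (He1 i Hi1) as [i0 [Hi0 Hs]]. destruct Hxj as [Hxj _].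
        eapply (Hb i0 m); [lia|lia|lia|apply Hs; eassumption|exact Hxj].
      * destruct (He1 i Hi1) as [i0 [Hi0 Hs]].
        assert (Hx : C m x /\ ~ B x) by (apply HDc; exists (j - m1 - 1); split; [lia|auto]).
        eapply (Hb i0 m); [lia|lia|lia|apply Hs; eassumption|apply Hx].
      * destruct (He1 j Hj1) as [i0 [Hi0 Hs]]. destruct Hxi as [Hxi _].
        eapply (Hb i0 m); [lia|lia|lia|apply Hs; eassumption|exact Hxi].
      * lia.
      * assert (Hx : C m x /\ ~ B x) by (apply HDc; exists (j - m1 - 1); split; [lia|auto]).
        tauto.
      * destruct (He1 j Hj1) as [i0 [Hi0 Hs]].
        assert (Hx : C m x /\ ~ B x) by (apply HDc; exists (i - m1 - 1); split; [lia|auto]).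
        eapply (Hb i0 m); [lia|lia|lia|apply Hs; eassumption|apply Hx].
      * assert (Hx : C m x /\ ~ B x) by (apply HDc; exists (i - m1 - 1); split; [lia|auto]).
        tauto.
      * eapply (HDb (i - m1 - 1) (j - m1 - 1)); [lia|lia|lia|eassumption..].
    + intro x. split.
      * intros [i [Hi Hx]]. destruct (Nat.eq_dec i m) as [->|Hne].
        -- destruct (classic (B x)) as [Bx|nBx].
           ++ exists m1. split; [lia|]. destruct (case3 m1) as [[? _]|[[_ E]|[? _]]]; try lia.
              rewrite E. auto.
           ++ destruct (proj1 (HDc x) (conj Hx nBx)) as [l [Hl Hlx]].
              exists (m1 + 1 + l). split; [lia|].
              destruct (case3 (m1 + 1 + l)) as [[? _]|[[? _]|[_ E]]]; try lia.
              rewrite E. replace (m1 + 1 + l - m1 - 1) with l by lia. auto.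
        -- assert (Him : i < m) by lia. destruct (proj1 (Hc1 x) (ex_intro _ i (conj Him Hx))) as [j [Hj Hjx]].
           exists j. split; [lia|]. destruct (case3 j) as [[_ E]|[[? _]|[? _]]]; try lia.
           rewrite E. auto.
      * intros [j [Hj Hx]]. destruct (Hin j Hj) as [i [Hi Hs]]. exists i. auto.
    + exact Hin.
    + intros j Hj. destruct (case3 j) as [[Hj1 E]|[[Hj1 E]|[Hj1 E]]]; rewrite E.
      * auto.
      * left. intros x [_ Hx]; auto.
      * right. intros x Hx.
        assert (Hx' : C m x /\ ~ B x) by (apply HDc; exists (j - m1 - 1); split; [lia|auto]).
        apply Hx'.
Qed.

Definition level {S} (H : set (set S)) (A : set S) (h : nat -> set S) (n m : nat)
  (C : nat -> set S) :=
  fam_ok H m C /\ (forall x, A x <-> exists i, i < m /\ C i x) /\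
  (forall i k, i < m -> k < n -> (forall x, C i x -> h k x) \/ (forall x, C i x -> ~ h k x)).

Lemma level_ex {S} (H : set (set S)) (A : set S) (h : nat -> set S) :
  semiring H -> H A -> (forall k, H (h k)) ->
  forall n, exists m C, level H A h n m C.
Proof.
  intros Hsemi HA Hh n. induction n as [|n IH].
  - exists 1, (fun _ => A). split; [split|split].
    + intros; auto.
    + intros; lia.
    + intro x. split; [intro; exists 0; split; [lia|auto]| intros [i [_ Hi]]; auto].
    + intros; lia.
  - destruct IH as [m [C [Hok [Hc Hd]]]].
    destruct (refine H (h n) Hsemi (Hh n) m C Hok) as [m' [C' [Hok' [Hc' [He Hf]]]]].
    exists m', C'. split; [auto|split].
    + intro x. rewrite Hc. apply Hc'.
    + intros i k Hi Hk. destruct (Nat.eq_dec k n) as [->|Hne].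
      * auto.
      * destruct (He i Hi) as [i0 [Hi0 Hs]].
        destruct (Hd i0 k Hi0 ltac:(lia)) as [L|R]; [left|right]; intros x Hx;
          [apply L|apply R]; auto.
Qed.

Theorem proposition2p8 (S : Type) (SS : set (set S)) (H : set (set S)) :
  sigma_algebra SS ->
  prod_sigma SS SS (diagonal S) ->
  (forall A, H A -> SS A) ->
  semiring H ->
  (forall A, sigma_gen H A <-> SS A) ->
  self_dissecting H.
Proof.
  intros HSS Hdiag HHS Hsemi Hgen.
  assert (H0 : H (fun _ => False)) by apply Hsemi.
  destruct (separating S SS H HSS Hdiag H0 (fun A HA => proj2 (Hgen A) HA)) as [h [Hh Hsep]].
  split; [exists (fun _ => False); exact H0|].
  intros A HA.
  assert (L : forall n, exists p : nat * (nat -> set S), level H A h n (fst p) (snd p)).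
  { intro n. destruct (level_ex H A h Hsemi HA Hh n) as [m [C HL]]. exists (m, C). exact HL. }
  destruct (choice_nat _ L) as [Lf HL].
  exists (fun n k => k < fst (Lf n)), (fun n k => snd (Lf n) k).
  split; [|intros n k Hk; apply (HL n); exact Hk].
  split; [|split; [|split; [|split]]].
  - intros n k l Hk Hl Hkl. apply (HL n); auto.
  - intros n x Hx. apply (proj1 (proj2 (HL (Datatypes.S n)))). apply (proj1 (proj2 (HL n))). exact Hx.
  - intros n k x Hk Hx. apply (proj1 (proj2 (HL n))). exists k. auto.
  - intros x Hx. exists 0. apply (proj1 (proj2 (HL 0))). exact Hx.
  - intros x y Hx Hy Hxy. destruct (Hsep x y Hxy) as [k Hk]. exists (Datatypes.S k).
    intros n Hn. destruct (proj1 (proj1 (proj2 (HL n)) x) Hx) as [i [Hi Hix]].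
    exists i. split; [exact Hi|]. left. split; [exact Hix|]. intro Hiy.
    destruct (proj2 (proj2 (HL n)) i k Hi ltac:(lia)) as [Hin|Hout].
    + apply Hk. split; intros _; [apply Hin; auto|apply Hin; auto].
    + apply Hk. split; intro Hc; exfalso; [eapply Hout; [exact Hix|exact Hc]|eapply Hout; [exact Hiy|exact Hc]].
Qed.
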